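(* Let $\mathscr{H}$ be a complex Hilbert space, $N(\cdot)$ a norm on $\mathbb{B}(\mathscr{H})$, and $B,C\in\mathbb{B}(\mathscr{H})$. Then (a) $w_{(N,e)}(B,C)\geq\max\{w_N(B),w_N(C)\}$; (b) $w_{(N,e)}(B,C)\leq\sqrt{w_N^2(B)+w_N^2(C)}$.
   Context: For $T\in\mathbb{B}(\mathscr{H})$: $\Re(T)=\frac12(T+T^* )$ and $w_N(T)=\sup_{\theta\in\mathbb{R}}N(\Re(e^{i\theta}T))$. For $B,C\in\mathbb{B}(\mathscr{H})$, $w_{(N,e)}(B,C)=\sup_{\lambda_1,\lambda_2\in\mathbb{C},\ |\lambda_1|^2+|\lambda_2|^2\leq 1}\sup_{\theta\in\mathbb{R}} N(\Re(e^{i\theta}(\lambda_1B+\lambda_2C)))$. *)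

(* Defs.v *)
From HB Require Import structures.
From mathcomp Require Import all_boot all_order all_algebra.
From mathcomp Require Import all_classical all_reals.
From mathcomp Require Import ereal trigo.
From mathcomp Require Import complex.
From Stdlib Require Import ClassicalEpsilon.

Set Implicit Arguments. Unset Strict Implicit. Unset Printing Implicit Defensive.
Import Order.TTheory GRing.Theory Num.Theory.
Local Open Scope ring_scope.

Section Hilbert.
Variable R : realType.
Local Notation C := (R[i]).
Variable V : lmodType C.
Variable ip : V -> V -> C.

Definition is_inner_product : Prop :=
  [/\ forall (a : C) (x y z : V), ip (a *: x + y) z = a * ip x z + ip y z,
      forall x y : V, ip y x = conjc (ip x y),
      forall x : V, 0 <= ip x x
    & forall x : V, ip x x = 0 -> x = 0].

Definition hnorm (x : V) : R := Num.sqrt (complex.Re (ip x x)).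

Definition hcomplete : Prop :=
  forall u : nat -> V,
    (forall e : R, 0 < e -> exists M : nat, forall m n : nat,
        (M <= m)%N -> (M <= n)%N -> hnorm (u m - u n) < e) ->
    exists l : V, forall e : R, 0 < e -> exists M : nat, forall n : nat,
        (M <= n)%N -> hnorm (u n - l) < e.

Definition is_hilbert : Prop := is_inner_product /\ hcomplete.

Definition bounded_op (T : V -> V) : Prop :=
  (forall (a : C) (x y : V), T (a *: x + y) = a *: T x + T y) /\
  exists K : R, forall x : V, hnorm (T x) <= K * hnorm x.

(* the adjoint T^* : T^* y is the (unique, by Riesz) z with <T x, y> = <x, z> for all x *)
Definition adj (T : V -> V) : V -> V := fun y =>
  match excluded_middle_informative
          (exists z : V, forall x : V, ip (T x) y = ip x z) with
  | left h => proj1_sig (constructive_indefinite_description _ h)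
  | right _ => 0
  end.

Definition ReOp (T : V -> V) : V -> V := fun x => (2%:R)^-1 *: (T x + adj T x).

Definition opadd (T U : V -> V) : V -> V := fun x => T x + U x.
Definition opscale (a : C) (T : V -> V) : V -> V := fun x => a *: T x.

Definition is_op_norm (N : (V -> V) -> R) : Prop :=
  [/\ forall T, bounded_op T -> 0 <= N T,
      forall T, bounded_op T -> N T = 0 -> T = (fun _ => 0),
      forall (a : C) T, bounded_op T -> N (opscale a T) = ComplexField.Normc.normc a * N T
    & forall T U, bounded_op T -> bounded_op U -> N (opadd T U) <= N T + N U].

Definition expi (t : R) : C := Complex (cos t) (sin t).

Definition wN (N : (V -> V) -> R) (T : V -> V) : \bar R :=
  ereal_sup [set (N (ReOp (opscale (expi t) T)))%:E | t in [set: R]].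

Definition wNe (N : (V -> V) -> R) (B Cop : V -> V) : \bar R :=
  ereal_sup [set x | exists (l1 l2 : C) (t : R),
     ComplexField.Normc.normc l1 ^+ 2 + ComplexField.Normc.normc l2 ^+ 2 <= 1 /\
     x = (N (ReOp (opscale (expi t) (opadd (opscale l1 B) (opscale l2 Cop)))))%:E].

End Hilbert.

(* square root on extended reals (sqrt(+oo) = +oo; -oo does not occur here) *)
Definition esqrt (R : realType) (x : \bar R) : \bar R :=
  match x with
  | EFin r => (Num.sqrt r)%:E
  | +oo%E => +oo%E
  | -oo%E => 0%E
  end.

(* Main.v *)
Require Import Defs.
From HB Require Import structures.
From mathcomp Require Import all_boot all_order all_algebra.
From mathcomp Require Import all_classical all_reals.
From mathcomp Require Import ereal trigo.
From mathcomp Require Import complex.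
Import Order.TTheory GRing.Theory Num.Theory.
Local Open Scope ring_scope.
From mathcomp Require Import ring lra.
From Stdlib Require Import ClassicalEpsilon.
Set Implicit Arguments. Unset Strict Implicit.

Section H.
Variable R : realType.
Local Notation C := R[i].
Variable V : lmodType C.
Variable ip : V -> V -> C.
Hypothesis hI : is_inner_product ip.

Definition n2 x := complex.Re (ip x x).

Lemma ipDl x y z : ip (x + y) z = ip x z + ip y z.
Proof. case: hI => h _ _ _. by have := h 1 x y z; rewrite scale1r mul1r. Qed.
Lemma ip0l z : ip 0 z = 0.
Proof. have h := ipDl 0 0 z; rewrite addr0 in h. apply: (addrI (ip 0 z)); by rewrite addr0 -h. Qed.
Lemma ipZl a x z : ip (a *: x) z = a * ip x z.
Proof. case: hI => h _ _ _. by have := h a x 0 z; rewrite addr0 ip0l addr0. Qed.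
Lemma ipC x y : ip y x = conjc (ip x y).
Proof. by case: hI. Qed.
Lemma conjcD (u v : C) : conjc (u + v) = conjc u + conjc v.
Proof. case: u => a b; case: v => c d /=. by rewrite opprD. Qed.
Lemma conjcM (u v : C) : conjc (u * v) = conjc u * conjc v.
Proof. case: u => a b; case: v => c d /=. congr Complex; ring. Qed.
Lemma ipDr x y z : ip z (x + y) = ip z x + ip z y.
Proof. by rewrite ipC ipDl conjcD -!ipC. Qed.
Lemma ipZr a x z : ip z (a *: x) = conjc a * ip z x.
Proof. by rewrite ipC ipZl conjcM -ipC. Qed.
Lemma ip0r z : ip z 0 = 0.
Proof. by rewrite ipC ip0l conjc0. Qed.
Lemma ipxx x : ip x x = (n2 x)%:C%C.
Proof.
case: hI => _ _ h _. have := h x. rewrite lecE /n2. case: (ip x x) => a b /= /andP[/eqP -> _]. by [].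
Qed.
Lemma n2_ge0 x : 0 <= n2 x.
Proof. case: hI => _ _ h _. have := h x. by rewrite lecE /n2 => /andP[]. Qed.
Lemma n2_eq0 x : n2 x = 0 -> x = 0.
Proof. case: hI => _ _ _ h. move=> e. apply: h. by rewrite ipxx e. Qed.

Lemma n2_quad a b s : n2 (a + s *: b) = n2 a + 2 * (complex.Re s * complex.Re (ip a b) + complex.Im s * complex.Im (ip a b)) + (complex.Re s ^+ 2 + complex.Im s ^+ 2) * n2 b.
Proof.
have ha := ipxx a; have hb := ipxx b.
rewrite {1}/n2 ipDl !ipDr !ipZl !ipZr (ipC a b) ha hb.
case: (ip a b) => p1 p2; case: s => s1 s2 /=. ring.
Qed.
Lemma n20 : n2 0 = 0.
Proof. by rewrite /n2 ip0l. Qed.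

Lemma CS a b : complex.Re (ip a b) ^+ 2 + complex.Im (ip a b) ^+ 2 <= n2 a * n2 b.
Proof.
have [hb|hb] := eqVneq (n2 b) 0.
  by rewrite (n2_eq0 hb) ip0r n20 mulr0 /= expr0n /= addr0.
have Bp : 0 < n2 b by rewrite lt_def hb n2_ge0.
have := n2_ge0 (a + (Complex (- complex.Re (ip a b) / n2 b) (- complex.Im (ip a b) / n2 b)) *: b).
rewrite n2_quad /=.
set A := n2 a; set B := n2 b; set p1 := complex.Re _; set p2 := complex.Im _.
have -> : A + 2 * (- p1 / B * p1 + - p2 / B * p2) + ((- p1 / B) ^+ 2 + (- p2 / B) ^+ 2) * B
   = A - (p1 ^+ 2 + p2 ^+ 2) / B.
  rewrite /B. field. by rewrite hb.
by rewrite subr_ge0 ler_pdivrMr // mulrC.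
Qed.

Lemma hnormE x : hnorm ip x = Num.sqrt (n2 x).
Proof. by []. Qed.

Lemma normc_def' (p : C) : ComplexField.Normc.normc p = Num.sqrt (complex.Re p ^+ 2 + complex.Im p ^+ 2).
Proof. by case: p. Qed.

Lemma CSn a b : ComplexField.Normc.normc (ip a b) <= hnorm ip a * hnorm ip b.
Proof.
rewrite normc_def' !hnormE -sqrtrM ?n2_ge0 // ler_sqrt; last by rewrite mulr_ge0 ?n2_ge0.
exact: CS.
Qed.

Lemma Re_le a b : complex.Re (ip a b) <= hnorm ip a * hnorm ip b.
Proof.
apply: le_trans (CSn a b). rewrite normc_def'.
apply: le_trans (ler_norm _) _. rewrite -sqrtr_sqr ler_sqrt ?addr_ge0 ?sqr_ge0 //.
by rewrite lerDl sqr_ge0.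
Qed.

Lemma hnorm_ge0 x : 0 <= hnorm ip x.
Proof. exact: sqrtr_ge0. Qed.

Lemma hnormD a b : hnorm ip (a + b) <= hnorm ip a + hnorm ip b.
Proof.
have := n2_quad a b 1. rewrite scale1r /= => e.
rewrite hnormE e -(@ger0_norm _ (hnorm ip a + hnorm ip b)) ?addr_ge0 ?hnorm_ge0 //.
rewrite -sqrtr_sqr ler_sqrt ?sqr_ge0 //.
have h1 := Re_le a b.
have hA : hnorm ip a ^+ 2 = n2 a by rewrite hnormE sqr_sqrtr ?n2_ge0.
have hB : hnorm ip b ^+ 2 = n2 b by rewrite hnormE sqr_sqrtr ?n2_ge0.
rewrite sqrrD hA hB. 
rewrite expr1n expr0n /= addr0 mul1r mul0r addr0 mul1r mulr2n.
lra.
Qed.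

Lemma n2Z s b : n2 (s *: b) = (complex.Re s ^+ 2 + complex.Im s ^+ 2) * n2 b.
Proof. have := n2_quad 0 b s. rewrite add0r n20 ip0l /= !mulr0 addr0 mulr0 !add0r. done. Qed.

Lemma hnormZ s b : hnorm ip (s *: b) = ComplexField.Normc.normc s * hnorm ip b.
Proof. by rewrite !hnormE n2Z sqrtrM ?addr_ge0 ?sqr_ge0 // normc_def'. Qed.
Lemma ipBr x y z : ip z (x - y) = ip z x - ip z y.
Proof. rewrite ipDr -scaleN1r ipZr. have -> : conjc (-1 : C) = -1 by apply/eqP; rewrite eq_complex /= opprK oppr0 !eqxx. by rewrite mulN1r. Qed.
Lemma hnormN x : hnorm ip (- x) = hnorm ip x.
Proof. by rewrite -scaleN1r hnormZ normcN ComplexField.Normc.normc1 mul1r. Qed.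
Lemma normc_ge0 (p : C) : 0 <= ComplexField.Normc.normc p.
Proof. rewrite normc_def'; exact: sqrtr_ge0. Qed.
End H.

Lemma small_inv (R : realType) (e : R) : 0 < e -> exists N : nat, forall n, (N <= n)%N -> (n.+1%:R)^-1 < e.
Proof.
move=> e0; exists (Num.Def.archi_bound e^-1) => n hn.
rewrite invf_plt ?posrE ?ltr0Sn //.
have h : 0 <= e^-1 by rewrite invr_ge0 ltW.
apply: (lt_le_trans (archi_boundP h)).
rewrite ler_nat. exact: leqW.
Qed.

Lemma le0_eps (R : realType) (c : R) : (forall e, 0 < e -> c <= e) -> c <= 0.
Proof.
move=> h; rewrite leNgt; apply/negP => c0.
have := h (c / 2%:R) (divr_gt0 c0 (ltr0Sn R 1)). lra.
Qed.

Section Riesz.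
Variable R : realType.
Local Notation C := R[i].
Variable V : lmodType C.
Variable ip : V -> V -> C.
Hypothesis hI : is_inner_product ip.
Hypothesis hc : hcomplete ip.

Variable f : V -> C.
Hypothesis flin : forall a x y, f (a *: x + y) = a * f x + f y.
Variable K : R.
Hypothesis fbd : forall x, ComplexField.Normc.normc (f x) <= K * hnorm ip x.

Lemma f0 : f 0 = 0.
Proof. have h := flin 1 0 0. rewrite scale1r mul1r addr0 in h. apply: (addrI (f 0)); by rewrite addr0 -h. Qed.
Lemma fD x y : f (x + y) = f x + f y.
Proof. have := flin 1 x y. by rewrite scale1r mul1r. Qed.
Lemma fZ a x : f (a *: x) = a * f x.
Proof. by rewrite -[a *: x]addr0 flin f0 addr0. Qed.
Lemma fB x y : f (x - y) = f x - f y.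
Proof. by rewrite fD -scaleN1r fZ mulN1r. Qed.

Lemma riesz : exists z, forall x, f x = ip x z.
Proof.
case: (pselect (exists w, f w != 0)); last first.
  move=> h; exists 0 => x. rewrite (ip0r hI). case: (eqVneq (f x) 0) => // hx. exfalso; apply: h. by exists x.
case=> w fw.
pose w1 := (f w)^-1 *: w.
have fw1 : f w1 = 1 by rewrite fZ mulVf.
pose S := [set y : R | exists x, f x = 1 /\ y = n2 ip x]%classic.
have Sn0 : (S !=set0)%classic by exists (n2 ip w1); exists w1.
have Slb : has_lbound S by exists 0 => y [x [_ ->]]; exact: (n2_ge0 hI).
pose d := inf S.
have d0 : 0 <= d by apply: lb_le_inf => // y [x [_ ->]]; exact: (n2_ge0 hI).
have dlb : forall x, f x = 1 -> d <= n2 ip x.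
  move=> x fx. apply: (ge_inf Slb). by exists x.
have ex : forall n : nat, exists x, f x = 1 /\ n2 ip x < d + (n.+1%:R)^-1.
  move=> n. have hp : 0 < (n.+1%:R : R)^-1 by rewrite invr_gt0 ltr0Sn.
  have [y [x [fx ->]] hy] := inf_adherent hp (conj Sn0 Slb).
  by exists x.
pose xs n := projT1 (cid (ex n)).
have fxs n : f (xs n) = 1 by rewrite /xs; case: cid => x [].
have nxs n : n2 ip (xs n) < d + (n.+1%:R)^-1 by rewrite /xs; case: cid => x [].
have para : forall a b, n2 ip (a - b) + n2 ip (a + b) = 2 * n2 ip a + 2 * n2 ip b.
  move=> a b. have h1 := n2_quad hI a b 1; have h2 := n2_quad hI a b (-1).
  rewrite scale1r in h1; rewrite scaleN1r in h2. rewrite h1 h2 /=. ring.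
have mid : forall a b, f a = 1 -> f b = 1 -> 4%:R * d <= n2 ip (a + b).
  move=> a b fa fb.
  have hm : f (Complex (2^-1) 0 *: (a + b)) = 1.
    rewrite fZ fD fa fb /=. congr Complex; last by rewrite addr0 mulr0 mul0r addr0.
    rewrite mul0r subr0. have h2 : (2 : R) != 0 by rewrite pnatr_eq0.
    by rewrite -[1 + 1]/(2 : R) mulVf.
  have := dlb _ hm. rewrite (n2Z hI) /=.
  have := n2_ge0 hI (a + b). lra.
have cauchy : forall m n, n2 ip (xs m - xs n) <= 2 * (m.+1%:R)^-1 + 2 * (n.+1%:R)^-1.
  move=> m n. have := para (xs m) (xs n). have := mid _ _ (fxs m) (fxs n).
  have := nxs m; have := nxs n. move: ((m.+1%:R : R)^-1) ((n.+1%:R : R)^-1) => im in_. lra.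
have sqlt : forall a e : R, 0 < e -> a < e ^+ 2 -> Num.sqrt a < e.
  move=> a e e0 h. by rewrite -(ger0_norm (ltW e0)) -sqrtr_sqr ltr_sqrt ?exprn_gt0.
have [l hl] : exists l, forall e, 0 < e -> exists M, forall n, (M <= n)%N -> hnorm ip (xs n - l) < e.
  apply: hc => e e0.
  have e20 : 0 < e ^+ 2 / 4%:R by rewrite divr_gt0 ?exprn_gt0.
  have [M hM] := small_inv e20.
  exists M => m n hm hn.
  rewrite hnormE; apply: sqlt => //.
  have := cauchy m n; have := hM m hm; have := hM n hn. move: ((m.+1%:R : R)^-1) ((n.+1%:R : R)^-1) (e ^+ 2) => im in_ E. lra.
have K'0 : 0 < `|K| + 1 by rewrite ltr_pwDr ?normr_ge0.
have fl : f l = 1.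
  have : ComplexField.Normc.normc (f l - 1) <= 0.
    apply: le0_eps => e e0.
    have [M hM] := hl (e / (`|K| + 1)) (divr_gt0 e0 K'0).
    have h := hM M (leqnn M).
    rewrite -normcN opprB -(fxs M) -fB.
    apply: le_trans (fbd _) _.
    have hn := hnorm_ge0 ip (xs M - l).
    apply: (@le_trans _ _ ((`|K| + 1) * hnorm ip (xs M - l))).
      apply: ler_wpM2r => //. apply: le_trans (ler_norm K) _. by rewrite lerDl.
    rewrite -ler_pdivlMl // mulrC. exact: ltW.
  move=> h. have h0 : ComplexField.Normc.normc (f l - 1) = 0.
    by apply/eqP; rewrite eq_le h normc_ge0.
  have := ComplexField.Normc.eq0_normc h0. by move/eqP; rewrite subr_eq0 => /eqP.
have nl : n2 ip l <= d.
  suff : hnorm ip l <= Num.sqrt d by rewrite hnormE ler_sqrt.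
  rewrite -subr_le0. apply: le0_eps => e e0.
  have e2 : 0 < e / 2 by rewrite divr_gt0.
  have [M1 hM1] := hl _ e2.
  have e22 : 0 < (e / 2) ^+ 2 by rewrite exprn_gt0.
  have [M2 hM2] := small_inv e22.
  have h1 := hM1 (maxn M1 M2) (leq_maxl _ _).
  have h2 := hM2 (maxn M1 M2) (leq_maxr _ _).
  have h3 := nxs (maxn M1 M2).
  set n := maxn M1 M2 in h1 h2 h3.
  have tri : hnorm ip l <= hnorm ip (xs n) + hnorm ip (xs n - l).
    have e1 : xs n + (l - xs n) = l by rewrite addrC subrK.
    have e3 : hnorm ip (l - xs n) = hnorm ip (xs n - l) by rewrite -(hnormN hI) opprB.
    have := hnormD hI (xs n) (l - xs n). by rewrite e1 e3.
  have sq : hnorm ip (xs n) <= Num.sqrt d + e / 2.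
    rewrite hnormE -(ger0_norm (addr_ge0 (sqrtr_ge0 d) (ltW e2))) -sqrtr_sqr.
    rewrite ler_sqrt ?sqr_ge0 // sqrrD sqr_sqrtr //.
    have : 0 <= Num.sqrt d * (e / 2) by rewrite mulr_ge0 ?sqrtr_ge0 // ltW.
    move: h3 h2. move: (Num.sqrt d * (e / 2)) ((n.+1%:R : R)^-1) ((e / 2) ^+ 2) => a b c.
    rewrite mulr2n. lra.
  move: tri sq h1. move: (hnorm ip l) (hnorm ip (xs n)) (hnorm ip (xs n - l)) (Num.sqrt d) => a b c q.
  lra.
have orth : forall k, f k = 0 -> ip l k = 0.
  move=> k fk.
  have Kk0 := n2_ge0 hI k.
  set t := (n2 ip k + 1)^-1.
  have t0 : 0 < t by rewrite invr_gt0 ltr_pwDr.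
  have tK : t * n2 ip k <= 1.
    rewrite /t mulrC ler_pdivrMr ?ltr_pwDr // mul1r. by rewrite lerDl.
  have fs : f (l + Complex (- t * complex.Re (ip l k)) (- t * complex.Im (ip l k)) *: k) = 1.
    by rewrite fD fZ fk mulr0 addr0.
  have := dlb _ fs. rewrite (n2_quad hI) /=.
  move: nl tK t0 Kk0. case: (ip l k) => p1 p2 /=.
  clear fs; clearbody t. move: (n2 ip l) (n2 ip k) t => A B T nl tK t0 B0 h.
  have P0 : p1 ^+ 2 + p2 ^+ 2 = 0.
    apply/eqP; rewrite eq_le addr_ge0 ?sqr_ge0 // andbT.
    have hP : 0 <= T * (p1 ^+ 2 + p2 ^+ 2) * (T * B - 2).
      have -> : T * (p1 ^+ 2 + p2 ^+ 2) * (T * B - 2) = 2 * (- T * p1 * p1 + - T * p2 * p2) + ((- T * p1) ^+ 2 + (- T * p2) ^+ 2) * B by ring.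
      lra.
    have hq : 0 <= T * (p1 ^+ 2 + p2 ^+ 2) by rewrite mulr_ge0 ?addr_ge0 ?sqr_ge0 // ltW.
    have : T * (p1 ^+ 2 + p2 ^+ 2) <= 0 by nra.
    by rewrite pmulr_rle0.
  have p10 : p1 = 0 by apply/eqP; rewrite -sqrf_eq0; apply/eqP; nra.
  have p20 : p2 = 0 by apply/eqP; rewrite -sqrf_eq0; apply/eqP; nra.
  by rewrite p10 p20.
have nl0 : n2 ip l != 0.
  apply/eqP => h. have e := n2_eq0 hI h. move: fl; rewrite e f0 => /eqP. by rewrite eq_sym oner_eq0.
exists (Complex (n2 ip l)^-1 0 *: l) => v.
have fk : f (v - f v *: l) = 0 by rewrite fB fZ fl mulr1 subrr.
have := orth _ fk. rewrite (ipBr hI) (ipZr hI) (ipxx hI l) => /eqP; rewrite subr_eq0 => /eqP hv.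
rewrite (ipZr hI) (ipC hI l v) hv.
move: nl0; case: (f v) => a b /= nl0. congr Complex; field; exact: nl0.
Qed.
End Riesz.

Section Adj.
Variable R : realType.
Local Notation C := R[i].
Variable V : lmodType C.
Variable ip : V -> V -> C.
Hypothesis hI : is_inner_product ip.
Hypothesis hc : hcomplete ip.

Lemma ip_inj z1 z2 : (forall x, ip x z1 = ip x z2) -> z1 = z2.
Proof.
move=> e. case: hI => _ _ _ h. apply/eqP; rewrite -subr_eq0; apply/eqP; apply: h.
by rewrite (ipBr hI) e subrr.
Qed.

Lemma adj_eq T y z : (forall x, ip (T x) y = ip x z) -> adj ip T y = z.
Proof.
move=> hz. rewrite /adj; case: excluded_middle_informative => [h|h]; last first.
  by exfalso; apply: h; exists z.
case: constructive_indefinite_description => z0 /= hz0.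
apply: ip_inj => x. by rewrite -hz0 hz.
Qed.

Lemma ipDlZ a x y z : ip (a *: x + y) z = a * ip x z + ip y z.
Proof. by case: hI. Qed.

Lemma adj_spec T : bounded_op ip T -> forall x y, ip (T x) y = ip x (adj ip T y).
Proof.
case=> Tlin [K hK] x y.
have flin : forall a x1 y1, (fun x => ip (T x) y) (a *: x1 + y1) = a * (fun x => ip (T x) y) x1 + (fun x => ip (T x) y) y1.
  move=> a x1 y1 /=. by rewrite Tlin ipDlZ.
have fbd : forall x1, ComplexField.Normc.normc ((fun x => ip (T x) y) x1) <= (K * hnorm ip y) * hnorm ip x1.
  move=> x1 /=. apply: le_trans (CSn hI _ _) _.
  rewrite mulrAC. apply: ler_wpM2r; [exact: hnorm_ge0 | exact: hK].
have [z hz] := riesz hI hc flin fbd.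
by rewrite (adj_eq hz) hz.
Qed.



Lemma adj_bounded T : bounded_op ip T -> bounded_op ip (adj ip T).
Proof.
move=> hT. have spec := adj_spec hT. case: hT => Tlin [K hK]. split.
  move=> a x y. apply: adj_eq => z. by rewrite !(ipDr hI) !(ipZr hI) !spec.
exists `|K| => y.
set z := adj ip T y.
have h1 : n2 ip z <= `|K| * hnorm ip z * hnorm ip y.
  rewrite /n2 -spec. apply: le_trans (Re_le hI _ _) _.
  apply: ler_wpM2r; first exact: hnorm_ge0.
  apply: le_trans (hK z) _. apply: ler_wpM2r; first exact: hnorm_ge0. exact: ler_norm.
have hz : hnorm ip z ^+ 2 = n2 ip z by rewrite hnormE sqr_sqrtr ?n2_ge0.
have [h0|h0] := eqVneq (hnorm ip z) 0.
  by rewrite h0 mulr_ge0 ?normr_ge0 ?hnorm_ge0.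
have hp : 0 < hnorm ip z by rewrite lt_def h0 hnorm_ge0.
rewrite -(ler_pM2l hp). rewrite -expr2 hz. by rewrite mulrCA mulrA.
Qed.

End Adj.

Lemma unit_circle (R : realType) (u : R[i]) : ComplexField.Normc.normc u = 1 -> exists t, expi t = u.
Proof.
case: u => a b. rewrite normc_def' /= => h.
have h1 : a ^+ 2 + b ^+ 2 = 1.
  have := sqr_sqrtr (addr_ge0 (sqr_ge0 a) (sqr_ge0 b)). by rewrite h expr1n.
have ha : -1 <= a <= 1 by apply/andP; split; nra.
have [_ hc] := acos_def ha.
have hs := sin_acos ha.
have hb : 1 - a ^+ 2 = b ^+ 2 by lra.
rewrite hb sqrtr_sqr in hs.
case: (leP 0 b) => b0.
  exists (acos a). rewrite /expi hc hs ger0_norm //.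
exists (- acos a). rewrite /expi cosN sinN hc hs ltr0_norm // opprK //.
Qed.

Section Comb.
Variable R : realType.
Local Notation C := R[i].
Variable V : lmodType C.
Variable ip : V -> V -> C.
Hypothesis hI : is_inner_product ip.
Hypothesis hc : hcomplete ip.

Lemma bounded_comb F G (a b : C) : bounded_op ip F -> bounded_op ip G ->
  bounded_op ip (fun x => a *: F x + b *: G x).
Proof.
case=> Flin [KF hF]; case=> Glin [KG hG]; split.
  move=> c x y. rewrite Flin Glin !scalerDr !scalerA (mulrC a c) (mulrC b c).
  by rewrite addrACA.
exists (ComplexField.Normc.normc a * `|KF| + ComplexField.Normc.normc b * `|KG|) => x.
apply: le_trans (hnormD hI _ _) _. rewrite !(hnormZ hI) mulrDl -!mulrA.
have hx := hnorm_ge0 ip x.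
apply: lerD; apply: ler_wpM2l; try exact: normc_ge0.
  apply: le_trans (hF x) _. apply: ler_wpM2r => //. exact: ler_norm.
apply: le_trans (hG x) _. apply: ler_wpM2r => //. exact: ler_norm.
Qed.

Lemma adj_comb F G (a b : C) y : bounded_op ip F -> bounded_op ip G ->
  adj ip (fun x => a *: F x + b *: G x) y = conjc a *: adj ip F y + conjc b *: adj ip G y.
Proof.
move=> hF hG. apply: (adj_eq hI) => x.
rewrite (ipDl hI) !(ipZl hI) (adj_spec hI hc hF) (adj_spec hI hc hG).
by rewrite (ipDr hI) !(ipZr hI) !conjcK.
Qed.

Lemma adj_scale u F y : bounded_op ip F -> adj ip (fun x => u *: F x) y = conjc u *: adj ip F y.
Proof.
move=> hF. apply: (adj_eq hI) => x.
by rewrite !(ipZl hI) (adj_spec hI hc hF) !(ipZr hI) conjcK.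
Qed.

Lemma ReOp_scale_eq (u : C) F : bounded_op ip F ->
  ReOp ip (opscale u F) = fun x => ((2%:R)^-1 * u) *: F x + ((2%:R)^-1 * conjc u) *: adj ip F x.
Proof.
move=> hF. apply: funext => x. rewrite /ReOp /opscale adj_scale // scalerDr !scalerA. by [].
Qed.

Lemma ReOp_bounded u F : bounded_op ip F -> bounded_op ip (ReOp ip (opscale u F)).
Proof.
move=> hF. rewrite ReOp_scale_eq //. apply: bounded_comb => //. exact: adj_bounded.
Qed.

Lemma opscale_bounded r X : bounded_op ip X -> bounded_op ip (opscale r X).
Proof.
move=> hX. have -> : opscale r X = fun x => r *: X x + 0 *: X x.
  apply: funext => x. by rewrite scale0r addr0.
exact: bounded_comb.
Qed.

Lemma decomp F G (e l1 l2 u v : C) (n1 n2 : R) : bounded_op ip F -> bounded_op ip G ->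
  e * l1 = n1%:C%C * u -> e * l2 = n2%:C%C * v ->
  ReOp ip (opscale e (opadd (opscale l1 F) (opscale l2 G))) =
  opadd (opscale n1%:C%C (ReOp ip (opscale u F))) (opscale n2%:C%C (ReOp ip (opscale v G))).
Proof.
move=> hF hG h1 h2.
have eS : opscale e (opadd (opscale l1 F) (opscale l2 G)) = fun x => (e * l1) *: F x + (e * l2) *: G x.
  apply: funext => x. by rewrite /opscale /opadd scalerDr !scalerA.
rewrite eS !ReOp_scale_eq //. apply: funext => x.
rewrite /ReOp /opadd /opscale (adj_comb _ _ _ hF hG) h1 h2 !conjcM !conjc_real.
rewrite !scalerDr !scalerA addrACA.
congr (_ + _); congr (_ + _); congr (_ *: _); by rewrite mulrCA.
Qed.
End Comb.

Lemma normc_real (R : realType) (r : R) : ComplexField.Normc.normc (r%:C%C) = `|r|.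
Proof. by rewrite normc_def' /= expr0n /= addr0 sqrtr_sqr. Qed.

Lemma normc_expi (R : realType) (t : R) : ComplexField.Normc.normc (expi t) = 1.
Proof. by rewrite normc_def' /= cos2Dsin2 sqrtr1. Qed.

Lemma polar (R : realType) (e l : R[i]) : ComplexField.Normc.normc e = 1 ->
  exists u, e * l = (ComplexField.Normc.normc l)%:C%C * u /\ ComplexField.Normc.normc u = 1.
Proof.
move=> he.
have [->|l0] := eqVneq l 0.
  exists 1; split; last exact: ComplexField.Normc.normc1.
  by rewrite mulr0 ComplexField.Normc.normc0 mulr1.
have n0 : ComplexField.Normc.normc l != 0.
  apply/eqP => h. move/eqP: l0; apply. exact: ComplexField.Normc.eq0_normc h.
have nc0 : (ComplexField.Normc.normc l)%:C%C != 0.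
  apply/eqP => h. move/eqP: n0; apply. have := congr1 (@complex.Re R) h. by [].
exists (e * l / (ComplexField.Normc.normc l)%:C%C); split.
  by rewrite [RHS]mulrC divfK.
rewrite !ComplexField.Normc.normcM ComplexField.Normc.normcV he normc_real mul1r.
rewrite ger0_norm ?normc_ge0 // mulfV //.
Qed.

Unset Implicit Arguments. Set Strict Implicit.

Theorem theorem2p4 (R : realType) (V : lmodType R[i]) (ip : V -> V -> R[i])
  (hH : is_hilbert ip) (N : (V -> V) -> R) (hN : is_op_norm ip N)
  (B Cop : V -> V) (hB : bounded_op ip B) (hC : bounded_op ip Cop) :
  (maxe (wN ip N B) (wN ip N Cop) <= wNe ip N B Cop)%E /\
  (wNe ip N B Cop <= esqrt (wN ip N B * wN ip N B + wN ip N Cop * wN ip N Cop))%E.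
Proof.
case: hH => hI hc.
split.
  rewrite ge_max; apply/andP; split; apply: ereal_sup_le => x [t _ <-].
    exists 1, 0, t; split.
      by rewrite ComplexField.Normc.normc1 ComplexField.Normc.normc0 expr1n expr0n /= addr0.
    congr (_%:E); congr (N _); congr (ReOp _ _); congr (opscale _ _).
    apply: funext => y. by rewrite /opadd /opscale scale1r scale0r addr0.
  exists 0, 1, t; split.
    by rewrite ComplexField.Normc.normc1 ComplexField.Normc.normc0 expr1n expr0n /= add0r.
  congr (_%:E); congr (N _); congr (ReOp _ _); congr (opscale _ _).
  apply: funext => y. by rewrite /opadd /opscale scale1r scale0r add0r.
apply: ge_ereal_sup => x [l1 [l2 [t [hl ->]]]].
have [u [hu1 hu2]] := polar l1 (normc_expi t).
have [v [hv1 hv2]] := polar l2 (normc_expi t).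
have [t1 et1] := unit_circle hu2.
have [t2 et2] := unit_circle hv2.
rewrite (decomp hI hc hB hC hu1 hv1).
have hX := ReOp_bounded hI hc u hB.
have hY := ReOp_bounded hI hc v hC.
set X := ReOp ip (opscale u B) in hX *.
set Y := ReOp ip (opscale v Cop) in hY *.
set n1 := ComplexField.Normc.normc l1 in hl *.
set n2 := ComplexField.Normc.normc l2 in hl *.
have n10 : 0 <= n1 by exact: normc_ge0.
have n20 : 0 <= n2 by exact: normc_ge0.
have le1 : N (opadd (opscale n1%:C%C X) (opscale n2%:C%C Y)) <= n1 * N X + n2 * N Y.
  case: hN => _ _ hZ hD.
  apply: le_trans (hD _ _ (opscale_bounded hI n1%:C%C hX) (opscale_bounded hI n2%:C%C hY)) _.
  by rewrite (hZ _ X) // (hZ _ Y) // !normc_real !ger0_norm.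
have NX0 : 0 <= N X by case: hN => h _ _ _; exact: h.
have NY0 : 0 <= N Y by case: hN => h _ _ _; exact: h.
have hXw : ((N X)%:E <= wN ip N B)%E.
  apply: ereal_sup_ubound. exists t1 => //. by rewrite et1.
have hYw : ((N Y)%:E <= wN ip N Cop)%E.
  apply: ereal_sup_ubound. exists t2 => //. by rewrite et2.
move: hXw hYw.
case: (wN ip N B) => [b| |] hb; case: (wN ip N Cop) => [c| |] hc' //=.
- rewrite lee_fin in hb; rewrite lee_fin in hc'. rewrite lee_fin.
  apply: le_trans le1 _.
  have h1 : n1 * N X + n2 * N Y <= n1 * b + n2 * c.
    by apply: lerD; apply: ler_wpM2l.
  apply: le_trans h1 _.
  apply: le_trans (ler_norm _) _. rewrite -sqrtr_sqr ler_sqrt; last by nra.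
  have h2 : 0 <= (n1 * c - n2 * b) ^+ 2 by exact: sqr_ge0.
  have h3 : 0 <= (1 - (n1 ^+ 2 + n2 ^+ 2)) * (b * b + c * c).
    apply: mulr_ge0; [lra | nra].
  nra.
all: by rewrite leey.
Qed.
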